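(* Let $G$ be an $X$-generated group with Cayley graph $\Gamma_X$, let $P$ be either $\operatorname{Sub}\Gamma_X$ or $\operatorname{CSub}\Gamma_X$, and let $()^c$ be a $G$-invariant closure operator on $(P,\subseteq)$. Let $S_c=\{(\Delta,g): g\in G,\ \Delta\in P \text{ compact},\ 1,g\in V(\Delta)\}$ with operations $(\Delta,g)(\Xi,h)=((\Delta\cup g\Xi)^c,gh)$ and $(\Delta,g)^{-1}=(g^{-1}\Delta,g^{-1})$. Then $S_c$ is an $E$-unitary inverse monoid (with identity $(\{1\}^c,1)$) whose greatest group image is $G$ via $(\Delta,g)\mapsto g$, and whose natural partial order is given by $(\Delta,g)\le(\Xi,h)$ iff $g=h$ and $\Xi\subseteq\Delta$. Moreover: (1) if $P=\operatorname{CSub}\Gamma_X$, then $S_c$ is $X$-generated as an inverse monoid via $x\mapsto(\langle\overline x\rangle^c,x_G)$, and the Schützenberger graph of $(\Delta,g)$ is isomorphic (as an $X$-labeled graph) to $\Delta$; (2) if $P=\operatorname{Sub}\Gamma_X$, then $S_c$ is an $F$-inverse monoid with $(\Delta,g)^{\mathfrak m}=(\{1,g\}^c,g)$ (where $\{1,g\}$ is the subgraph with vertices $1,g$ and no edges), it is $X$-generated as an $F$-inverse monoid via $x\mapsto(\langle\overline x\rangle^c,x_G)$, and the $F$-Schützenberger graph of $(\Delta,g)$ equals $\Delta$.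
   Context: $\Gamma_X$ is the Cayley graph of the $X$-generated group $G$ (vertices $G$, edge labeled $x$ from $g$ to $gx_G$ for $x\in X\cup X^{-1}$, edges paired with inverses); subgraphs are closed under endpoints and inverses; $\operatorname{Sub}\Gamma_X$ (all subgraphs) and $\operatorname{CSub}\Gamma_X$ (connected subgraphs) are ordered by inclusion; $G$ acts on the left. A closure operator $()^c$ is $G$-invariant if $(g\Delta)^c=g\Delta^c$. A subgraph is compact (for $()^c$) if it equals $F^c$ for some finite $F\in P$. $\overline x$ is the edge path from $1$ labeled $x$ and $\langle\overline x\rangle$ the subgraph it spans. For an $X$-generated inverse monoid, its Cayley graph has vertex set $S$ and an edge labeled $x$ from $s$ to $sx_S$; the Schützenberger graph of $s$ is the strongly connected component containing $s$ (vertex set the $\mathcal R$-class of $s$). An $F$-inverse monoid is an inverse monoid where each $\sigma$-class has a greatest element $s^{\mathfrak m}$, viewed in signature $(\cdot,1,{}^{-1},{}^{\mathfrak m})$. For an $X$-generated $F$-inverse monoid $S$ with greatest group image $G$, terms in $\mathbb{I}\mathfrak{m}_X$ (formal expressions $u_0v_1^{\mathfrak m}u_1\cdots v_n^{\mathfrak m}u_n$) label journeys $\overline w=(\overline{u_0},(u_0v_1)_G\overline{u_1},\dots)$ in $\Gamma_X$; a subgraph $\Delta$ is $c_S$-closed if for all $u,v$ with $u_S=v_S$ and $g,h\in V(\Delta)$, $u$ labels a journey in $\Delta$ from $g$ to $h$ iff $v$ does; and the $F$-Schützenberger graph of $s=w_S$ is $\langle\overline w\rangle^{c_S}$, the smallest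 $c_S$-closed subgraph containing the graph spanned by the journey $\overline w$ (independent of the choice of $w$). *)

(* Defs.v *)
From Stdlib Require Import List Bool.
Set Implicit Arguments.
Unset Strict Implicit.

Record Group := {
  gcar :> Type;
  gmul : gcar -> gcar -> gcar;
  gone : gcar;
  ginv : gcar -> gcar;
  gmulA : forall a b c, gmul a (gmul b c) = gmul (gmul a b) c;
  gmul1 : forall a, gmul a gone = a;
  g1mul : forall a, gmul gone a = a;
  gmulV : forall a, gmul a (ginv a) = gone;
  gVmul : forall a, gmul (ginv a) a = gone }.

Arguments gmul {g}.
Arguments gone {g}.
Arguments ginv {g}.

(* Letters of X u X^{-1}: (x, true) stands for x, (x, false) for x^{-1}. *)
Definition letter (X : Type) := (X * bool)%type.
Definition linv (X : Type) (a : letter X) : letter X := (fst a, negb (snd a)).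

Definition lval (G : Group) (X : Type) (i : X -> G) (a : letter X) : G :=
  if snd a then i (fst a) else ginv (i (fst a)).
Fixpoint wval (G : Group) (X : Type) (i : X -> G) (w : list (letter X)) : G :=
  match w with nil => gone | a :: w' => gmul (lval i a) (wval i w') end.

Definition X_generated (G : Group) (X : Type) (i : X -> G) : Prop :=
  forall g : G, exists w, wval i w = g.

(* An edge of Gamma_X is determined by its initial vertex g and its label a;
   it goes from g to g * a_G. *)
Definition edge (G : Group) (X : Type) := (G * letter X)%type.
Definition etgt (G : Group) (X : Type) (i : X -> G) (e : edge G X) : G :=
  gmul (fst e) (lval i (snd e)).
Definition einv (G : Group) (X : Type) (i : X -> G) (e : edge G X) : edge G X :=
  (etgt i e, linv (snd e)).

(* a (not necessarily closed) pair (vertex set, edge set) *)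
Record subgraph (G : Group) (X : Type) := mkSG {
  sv : G -> Prop;
  se : edge G X -> Prop }.
Arguments mkSG {G X}.

Definition is_subgraph (G : Group) (X : Type) (i : X -> G) (D : subgraph G X) :=
  forall e, se D e -> sv D (fst e) /\ sv D (etgt i e) /\ se D (einv i e).

Definition sub_le (G : Group) (X : Type) (D E : subgraph G X) : Prop :=
  (forall v, sv D v -> sv E v) /\ (forall e, se D e -> se E e).

Definition sg_union (G : Group) (X : Type) (D E : subgraph G X) : subgraph G X :=
  mkSG (fun v => sv D v \/ sv E v) (fun e => se D e \/ se E e).

Definition sg_translate (G : Group) (X : Type) (g : G) (D : subgraph G X)
  : subgraph G X :=
  mkSG (fun v => sv D (gmul (ginv g) v))
       (fun e => se D (gmul (ginv g) (fst e), snd e)).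

Definition sg_verts (G : Group) (X : Type) (l : list G) : subgraph G X :=
  mkSG (fun v => In v l) (fun _ => False).

Definition sg_letter (G : Group) (X : Type) (i : X -> G) (x : X) : subgraph G X :=
  mkSG (fun v => v = gone \/ v = i x)
       (fun e => e = (gone, (x, true)) \/ e = (i x, (x, false))).

Fixpoint walk_in (G : Group) (X : Type) (i : X -> G) (D : subgraph G X)
  (u : G) (w : list (letter X)) : Prop :=
  match w with
  | nil => True
  | a :: w' => se D (u, a) /\ walk_in i D (gmul u (lval i a)) w'
  end.

Definition connected (G : Group) (X : Type) (i : X -> G) (D : subgraph G X) :=
  forall u v, sv D u -> sv D v ->
    exists w, walk_in i D u w /\ gmul u (wval i w) = v.

(* membership in P : P = CSub Gamma_X if conn = true, P = Sub Gamma_X otherwise *)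
Definition inP (G : Group) (X : Type) (i : X -> G) (conn : bool) (D : subgraph G X) :=
  is_subgraph i D /\ (conn = true -> connected i D).

Definition finite_sg (G : Group) (X : Type) (D : subgraph G X) : Prop :=
  (exists l, forall v, sv D v -> In v l) /\ (exists l, forall e, se D e -> In e l).

Definition closure_op (G : Group) (X : Type) (i : X -> G) (conn : bool)
  (c : subgraph G X -> subgraph G X) : Prop :=
  (forall D, inP i conn D ->
     inP i conn (c D) /\ sub_le D (c D) /\ c (c D) = c D) /\
  (forall D E, inP i conn D -> inP i conn E -> sub_le D E -> sub_le (c D) (c E)).

Definition G_invariant (G : Group) (X : Type) (i : X -> G) (conn : bool)
  (c : subgraph G X -> subgraph G X) : Prop :=
  forall (g : G) D, inP i conn D -> c (sg_translate g D) = sg_translate g (c D).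

Definition compact (G : Group) (X : Type) (i : X -> G) (conn : bool)
  (c : subgraph G X -> subgraph G X) (D : subgraph G X) : Prop :=
  exists F, inP i conn F /\ finite_sg F /\ D = c F.

Definition Sc (G : Group) (X : Type) (i : X -> G) (conn : bool)
  (c : subgraph G X -> subgraph G X) (p : subgraph G X * G) : Prop :=
  compact i conn c (fst p) /\ sv (fst p) gone /\ sv (fst p) (snd p).

Definition Sc_mul (G : Group) (X : Type) (c : subgraph G X -> subgraph G X)
  (p q : subgraph G X * G) : subgraph G X * G :=
  (c (sg_union (fst p) (sg_translate (snd p) (fst q))), gmul (snd p) (snd q)).

Definition Sc_inv (G : Group) (X : Type) (p : subgraph G X * G) : subgraph G X * G :=
  (sg_translate (ginv (snd p)) (fst p), ginv (snd p)).

Definition Sc_one (G : Group) (X : Type) (c : subgraph G X -> subgraph G X)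
  : subgraph G X * G := (c (@sg_verts G X (gone :: nil)), gone).

Definition Sc_gen (G : Group) (X : Type) (i : X -> G)
  (c : subgraph G X -> subgraph G X) (x : X) : subgraph G X * G :=
  (c (sg_letter i x), i x).

Definition Sc_m (G : Group) (X : Type) (c : subgraph G X -> subgraph G X)
  (p : subgraph G X * G) : subgraph G X * G :=
  (c (@sg_verts G X (gone :: snd p :: nil)), snd p).

Definition inverse_monoid (T : Type) (S : T -> Prop) (mul : T -> T -> T)
  (one : T) (inv : T -> T) : Prop :=
  (S one /\ (forall a b, S a -> S b -> S (mul a b)) /\ (forall a, S a -> S (inv a))) /\
  (forall a b d, S a -> S b -> S d -> mul a (mul b d) = mul (mul a b) d) /\
  (forall a, S a -> mul one a = a /\ mul a one = a) /\
  (forall a, S a ->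
     mul (mul a (inv a)) a = a /\ mul (mul (inv a) a) (inv a) = inv a /\
     (forall b, S b -> mul (mul a b) a = a -> mul (mul b a) b = b -> b = inv a)).

Definition idempotent (T : Type) (S : T -> Prop) (mul : T -> T -> T) (e : T) :=
  S e /\ mul e e = e.

Definition nat_le (T : Type) (S : T -> Prop) (mul : T -> T -> T) (a b : T) :=
  exists e, idempotent S mul e /\ a = mul e b.

Definition E_unitary (T : Type) (S : T -> Prop) (mul : T -> T -> T) :=
  forall e s, S s -> idempotent S mul e -> idempotent S mul (mul e s) ->
    idempotent S mul s.

Definition sigma_rel (T : Type) (S : T -> Prop) (mul : T -> T -> T) (a b : T) :=
  exists e, idempotent S mul e /\ mul e a = mul e b.

(* phi : S -> G is a surjective monoid morphism with kernel sigma, i.e.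
   G is (isomorphic via phi to) the greatest group image S / sigma *)
Definition greatest_group_image (T : Type) (S : T -> Prop) (mul : T -> T -> T)
  (one : T) (G : Group) (phi : T -> G) : Prop :=
  phi one = gone /\
  (forall a b, S a -> S b -> phi (mul a b) = gmul (phi a) (phi b)) /\
  (forall g : G, exists a, S a /\ phi a = g) /\
  (forall a b, S a -> S b -> (phi a = phi b <-> sigma_rel S mul a b)).

Definition F_inverse_with (T : Type) (S : T -> Prop) (mul : T -> T -> T)
  (m : T -> T) : Prop :=
  forall a, S a ->
    S (m a) /\ sigma_rel S mul (m a) a /\
    (forall b, S b -> sigma_rel S mul b a -> nat_le S mul b (m a)).

Definition gen_l (T X : Type) (inv : T -> T) (gen : X -> T) (a : letter X) : T :=
  if snd a then gen (fst a) else inv (gen (fst a)).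

Fixpoint word_eval (T X : Type) (mul : T -> T -> T) (one : T) (inv : T -> T)
  (gen : X -> T) (w : list (letter X)) : T :=
  match w with
  | nil => one
  | a :: w' => mul (gen_l inv gen a) (word_eval mul one inv gen w')
  end.

Definition X_gen_inverse_monoid (T X : Type) (S : T -> Prop) (mul : T -> T -> T)
  (one : T) (inv : T -> T) (gen : X -> T) : Prop :=
  (forall x, S (gen x)) /\
  (forall s, S s -> exists w, word_eval mul one inv gen w = s).

Inductive fterm (X : Type) :=
| FGen : X -> fterm X
| FOne : fterm X
| FMul : fterm X -> fterm X -> fterm X
| FInv : fterm X -> fterm X
| FM : fterm X -> fterm X.
Arguments FOne {X}.

Fixpoint fterm_eval (T X : Type) (mul : T -> T -> T) (one : T) (inv : T -> T)
  (m : T -> T) (gen : X -> T) (t : fterm X) : T :=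
  match t with
  | FGen x => gen x
  | FOne => one
  | FMul t1 t2 => mul (fterm_eval mul one inv m gen t1) (fterm_eval mul one inv m gen t2)
  | FInv t1 => inv (fterm_eval mul one inv m gen t1)
  | FM t1 => m (fterm_eval mul one inv m gen t1)
  end.

Definition X_gen_F_inverse_monoid (T X : Type) (S : T -> Prop) (mul : T -> T -> T)
  (one : T) (inv : T -> T) (m : T -> T) (gen : X -> T) : Prop :=
  (forall x, S (gen x)) /\
  (forall s, S s -> exists t, fterm_eval mul one inv m gen t = s).

Definition R_rel (T : Type) (S : T -> Prop) (mul : T -> T -> T) (s t : T) :=
  exists u v, S u /\ S v /\ t = mul s u /\ s = mul t v.

Definition lgraph_iso (A B EA EB L : Type)
  (VA : A -> Prop) (EdA : EA -> Prop) (srcA tgtA : EA -> A) (labA : EA -> L)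
  (VB : B -> Prop) (EdB : EB -> Prop) (srcB tgtB : EB -> B) (labB : EB -> L) :=
  exists (f : A -> B) (h : EA -> EB),
    (forall v, VA v -> VB (f v)) /\
    (forall v w, VA v -> VA w -> f v = f w -> v = w) /\
    (forall y, VB y -> exists v, VA v /\ f v = y) /\
    (forall e, EdA e -> EdB (h e)) /\
    (forall e e', EdA e -> EdA e' -> h e = h e' -> e = e') /\
    (forall y, EdB y -> exists e, EdA e /\ h e = y) /\
    (forall e, EdA e -> srcB (h e) = f (srcA e) /\ tgtB (h e) = f (tgtA e)
                        /\ labB (h e) = labA e).

(* The Schutzenberger graph of s (strongly connected component of s in the
   Cayley graph of the X-generated inverse monoid) is isomorphic to D *)
Definition schutz_iso (T X : Type) (S : T -> Prop) (mul : T -> T -> T)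
  (inv : T -> T) (gen : X -> T) (s : T) (G : Group) (i : X -> G)
  (D : subgraph G X) : Prop :=
  lgraph_iso
    (fun t => S t /\ R_rel S mul s t)
    (fun e : T * letter X => S (fst e) /\ R_rel S mul s (fst e) /\
                             R_rel S mul s (mul (fst e) (gen_l inv gen (snd e))))
    (fun e => fst e) (fun e => mul (fst e) (gen_l inv gen (snd e))) (fun e => snd e)
    (sv D) (se D) (fun e => fst e) (etgt i) (fun e => snd e).

(* An Im_X-term u0 v1^m u1 ... vn^m un, read as a sequence of letters and
   m-applied subterms. *)
Inductive imterm (X : Type) :=
| Iend : imterm X
| Ilet : letter X -> imterm X -> imterm X
| Im : imterm X -> imterm X -> imterm X.
Arguments Iend {X}.

Fixpoint im_eval (T X : Type) (mul : T -> T -> T) (one : T) (inv : T -> T)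
  (m : T -> T) (gen : X -> T) (t : imterm X) : T :=
  match t with
  | Iend => one
  | Ilet a t' => mul (gen_l inv gen a) (im_eval mul one inv m gen t')
  | Im v t' => mul (m (im_eval mul one inv m gen v)) (im_eval mul one inv m gen t')
  end.

Fixpoint im_gval (G : Group) (X : Type) (i : X -> G) (t : imterm X) : G :=
  match t with
  | Iend => gone
  | Ilet a t' => gmul (lval i a) (im_gval i t')
  | Im v t' => gmul (im_gval i v) (im_gval i t')
  end.

Fixpoint jverts (G : Group) (X : Type) (i : X -> G) (g : G) (t : imterm X) : G -> Prop :=
  match t with
  | Iend => fun v => v = g
  | Ilet a t' => fun v => v = g \/ jverts i (gmul g (lval i a)) t' v
  | Im w t' => fun v => v = g \/ jverts i (gmul g (im_gval i w)) t' v
  end.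

Fixpoint jedges (G : Group) (X : Type) (i : X -> G) (g : G) (t : imterm X)
  : edge G X -> Prop :=
  match t with
  | Iend => fun _ => False
  | Ilet a t' => fun e => e = (g, a) \/ e = einv i (g, a) \/
                          jedges i (gmul g (lval i a)) t' e
  | Im w t' => fun e => jedges i (gmul g (im_gval i w)) t' e
  end.

Definition journey_graph (G : Group) (X : Type) (i : X -> G) (t : imterm X)
  : subgraph G X := mkSG (jverts i gone t) (jedges i gone t).

Definition labels_journey (G : Group) (X : Type) (i : X -> G) (D : subgraph G X)
  (g h : G) (t : imterm X) : Prop :=
  (forall v, jverts i g t v -> sv D v) /\ (forall e, jedges i g t e -> se D e) /\
  h = gmul g (im_gval i t).

Definition cS_closed (T : Type) (G : Group) (X : Type) (i : X -> G)
  (mul : T -> T -> T) (one : T) (inv : T -> T) (m : T -> T) (gen : X -> T)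
  (D : subgraph G X) : Prop :=
  forall u v : imterm X,
    im_eval mul one inv m gen u = im_eval mul one inv m gen v ->
    forall g h, sv D g -> sv D h ->
      (labels_journey i D g h u <-> labels_journey i D g h v).

Definition F_schutz_graph (T : Type) (G : Group) (X : Type) (i : X -> G)
  (mul : T -> T -> T) (one : T) (inv : T -> T) (m : T -> T) (gen : X -> T)
  (s : T) (D : subgraph G X) : Prop :=
  (exists w, im_eval mul one inv m gen w = s) /\
  forall w, im_eval mul one inv m gen w = s ->
    is_subgraph i D /\ cS_closed i mul one inv m gen D /\
    sub_le (journey_graph i w) D /\
    (forall E, is_subgraph i E -> cS_closed i mul one inv m gen E ->
       sub_le (journey_graph i w) E -> sub_le D E).

(* Main.v *)
Require Import Defs.
From Stdlib Require Import List Bool Classical FunctionalExtensionality PropExtensionality.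
Set Implicit Arguments.
Unset Strict Implicit.

Section Gp.
Context {G : Group}.

Lemma gVK (a b : G) : gmul (ginv a) (gmul a b) = b.
Proof. rewrite gmulA, gVmul, g1mul; reflexivity. Qed.
Lemma gKV (a b : G) : gmul a (gmul (ginv a) b) = b.
Proof. rewrite gmulA, gmulV, g1mul; reflexivity. Qed.
Lemma gcancel (a x y : G) : gmul a x = gmul a y -> x = y.
Proof. intro H. rewrite <- (gVK a x), <- (gVK a y), H. reflexivity. Qed.
Lemma ginv1 : ginv (@gone G) = gone.
Proof. rewrite <- (g1mul (ginv (@gone G))). apply gmulV. Qed.
Lemma ginvK (a : G) : ginv (ginv a) = a.
Proof. apply gcancel with (a := ginv a). rewrite gmulV, gVmul. reflexivity. Qed.
Lemma ginvM (a b : G) : ginv (gmul a b) = gmul (ginv b) (ginv a).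
Proof. apply gcancel with (a := gmul a b). rewrite gmulV.
  rewrite <- gmulA, (gmulA b), gmulV, g1mul, gmulV. reflexivity. Qed.
End Gp.

Section Basic.
Context (G : Group) (X : Type) (i : X -> G).

Lemma lval_linv (a : letter X) : gmul (lval i a) (lval i (linv a)) = gone.
Proof. destruct a as [x []]; unfold lval, linv; simpl. apply gmulV. apply gVmul. Qed.
Lemma linvK (a : letter X) : linv (linv a) = a.
Proof. destruct a as [x b]; unfold linv; simpl; rewrite negb_involutive; reflexivity. Qed.
Lemma etgt_einv (e : edge G X) : etgt i (einv i e) = fst e.
Proof. destruct e as [u a]; unfold einv; unfold etgt; simpl. rewrite <- gmulA, lval_linv, gmul1. reflexivity. Qed.
Lemma einvK (e : edge G X) : einv i (einv i e) = e.
Proof. unfold einv at 1. rewrite etgt_einv. destruct e as [u a]; simpl. rewrite linvK; reflexivity. Qed.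

Lemma sg_ext (D E : subgraph G X) : (forall v, sv D v <-> sv E v) -> (forall e, se D e <-> se E e) -> D = E.
Proof. destruct D, E; simpl; intros H1 H2; f_equal; apply functional_extensionality; intros;
  apply propositional_extensionality; auto. Qed.
Lemma sub_antisym (D E : subgraph G X) : sub_le D E -> sub_le E D -> D = E.
Proof. intros [] []; apply sg_ext; split; auto. Qed.
Lemma sub_refl (D : subgraph G X) : sub_le D D.
Proof. split; auto. Qed.
Lemma sub_trans (D E F : subgraph G X) : sub_le D E -> sub_le E F -> sub_le D F.
Proof. intros [] []; split; auto. Qed.
Lemma sub_union_l (D E : subgraph G X) : sub_le D (sg_union D E).
Proof. split; simpl; auto. Qed.
Lemma sub_union_r (D E : subgraph G X) : sub_le E (sg_union D E).
Proof. split; simpl; auto. Qed.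
Lemma union_lub (D E F : subgraph G X) : sub_le D F -> sub_le E F -> sub_le (sg_union D E) F.
Proof. intros [] []; split; simpl; intros ? []; auto. Qed.
Lemma union_absorb (D E : subgraph G X) : sub_le E D -> sg_union D E = D.
Proof. intros; apply sub_antisym. apply union_lub; auto using sub_refl. apply sub_union_l. Qed.
Lemma union_comm (D E : subgraph G X) : sg_union D E = sg_union E D.
Proof. apply sub_antisym; apply union_lub; auto using sub_union_l, sub_union_r. Qed.
Lemma union_mono (A B C D : subgraph G X) : sub_le A C -> sub_le B D -> sub_le (sg_union A B) (sg_union C D).
Proof. intros [] []; split; simpl; intros ? []; auto. Qed.

Lemma tr_one (D : subgraph G X) : sg_translate gone D = D.
Proof. apply sg_ext; simpl; intros; rewrite ginv1, g1mul; [tauto|destruct e; tauto]. Qed.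
Lemma tr_tr (g h : G) (D : subgraph G X) : sg_translate g (sg_translate h D) = sg_translate (gmul g h) D.
Proof. apply sg_ext; simpl; intros; rewrite ginvM, gmulA; tauto. Qed.
Lemma tr_union (g : G) (D E : subgraph G X) : sg_translate g (sg_union D E) = sg_union (sg_translate g D) (sg_translate g E).
Proof. apply sg_ext; simpl; tauto. Qed.
Lemma tr_le (g : G) (D E : subgraph G X) : sub_le D E -> sub_le (sg_translate g D) (sg_translate g E).
Proof. intros []; split; simpl; auto. Qed.
Lemma tr_le_inv (g : G) (D E : subgraph G X) : sub_le (sg_translate g D) (sg_translate g E) -> sub_le D E.
Proof. intro H. apply (tr_le (ginv g)) in H. rewrite !tr_tr, gVmul, !tr_one in H. exact H. Qed.
Lemma sv_tr (g v : G) (D : subgraph G X) : sv (sg_translate g D) (gmul g v) <-> sv D v.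
Proof. simpl. rewrite gVK. tauto. Qed.
Lemma se_tr (g v : G) a (D : subgraph G X) : se (sg_translate g D) (gmul g v, a) <-> se D (v, a).
Proof. simpl. rewrite gVK. tauto. Qed.

Lemma fin_union (D E : subgraph G X) : finite_sg D -> finite_sg E -> finite_sg (sg_union D E).
Proof. intros [[l1 H1] [l2 H2]] [[l3 H3] [l4 H4]]. split.
  exists (l1 ++ l3). simpl; intros v []; apply in_or_app; auto.
  exists (l2 ++ l4). simpl; intros v []; apply in_or_app; auto. Qed.
Lemma fin_tr (g : G) (D : subgraph G X) : finite_sg D -> finite_sg (sg_translate g D).
Proof. intros [[l1 H1] [l2 H2]]. split.
  exists (map (gmul g) l1). simpl; intros v Hv. rewrite <- (gKV g v). apply in_map. auto.
  exists (map (fun e => (gmul g (fst e), snd e)) l2). simpl; intros e He.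
  apply H2 in He. apply in_map with (f := fun e => (gmul g (fst e), snd e)) in He.
  simpl in He. rewrite gKV in He. destruct e; exact He. Qed.
Lemma fin_verts (l : list G) : finite_sg (@sg_verts G X l).
Proof. split. exists l; simpl; auto. exists nil; simpl; tauto. Qed.
End Basic.
Section Jour.
Context (G : Group) (X : Type) (i : X -> G).

Fixpoint letters_only (t : imterm X) : Prop :=
  match t with Iend => True | Ilet _ t => letters_only t | Im _ _ => False end.
Fixpoint of_word (w : list (letter X)) : imterm X :=
  match w with nil => Iend | a :: w => Ilet a (of_word w) end.
Fixpoint tapp (t1 t2 : imterm X) : imterm X :=
  match t1 with Iend => t2 | Ilet a t => Ilet a (tapp t t2) | Im v t => Im v (tapp t t2) end.
Definition J (u : G) (t : imterm X) : subgraph G X := mkSG (jverts i u t) (jedges i u t).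

Lemma jv_start u t : jverts i u t u.
Proof. destruct t; simpl; auto. Qed.
Lemma jv_end u t : jverts i u t (gmul u (im_gval i t)).
Proof. revert u; induction t; intro u; simpl.
  - rewrite gmul1; auto.
  - right. rewrite gmulA. apply IHt.
  - right. rewrite gmulA. apply IHt2. Qed.
Lemma gval_app t1 t2 : im_gval i (tapp t1 t2) = gmul (im_gval i t1) (im_gval i t2).
Proof. induction t1; simpl. rewrite g1mul; auto. rewrite IHt1, gmulA; auto. rewrite IHt1_2, gmulA; auto. Qed.
Lemma jv_app u t1 t2 v : jverts i u (tapp t1 t2) v <-> jverts i u t1 v \/ jverts i (gmul u (im_gval i t1)) t2 v.
Proof. revert u; induction t1; intro u; simpl.
  - rewrite gmul1. split; [auto|]. intros [ -> |]; auto using jv_start.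
  - rewrite IHt1, gmulA. tauto.
  - rewrite IHt1_2, gmulA. tauto. Qed.
Lemma je_app u t1 t2 e : jedges i u (tapp t1 t2) e <-> jedges i u t1 e \/ jedges i (gmul u (im_gval i t1)) t2 e.
Proof. revert u; induction t1; intro u; simpl.
  - rewrite gmul1. tauto.
  - rewrite IHt1, gmulA. tauto.
  - rewrite IHt1_2, gmulA. tauto. Qed.
Lemma lo_app t1 t2 : letters_only t1 -> letters_only t2 -> letters_only (tapp t1 t2).
Proof. induction t1; simpl; tauto. Qed.

Lemma eq_tr (g u v : G) : v = gmul g u <-> gmul (ginv g) v = u.
Proof. split; [intros ->; apply gVK | intros <-; symmetry; apply gKV]. Qed.
Lemma pair_tr (g u w : G) (a b : letter X) : (w, b) = (gmul g u, a) <-> (gmul (ginv g) w, b) = (u, a).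
Proof. split; intro H; inversion H; subst; f_equal. apply gVK. symmetry; apply gKV. Qed.

Lemma jv_tr g u t v : jverts i (gmul g u) t v <-> jverts i u t (gmul (ginv g) v).
Proof. revert u; induction t; intro u; simpl.
  - apply eq_tr.
  - rewrite <- gmulA, IHt, eq_tr. tauto.
  - rewrite <- gmulA, IHt2, eq_tr. tauto. Qed.
Lemma je_tr g u t (e : edge G X) : jedges i (gmul g u) t e <-> jedges i u t (gmul (ginv g) (fst e), snd e).
Proof. revert u; induction t; intro u; simpl.
  - tauto.
  - rewrite <- gmulA, IHt. unfold einv, etgt; simpl. rewrite <- !gmulA. destruct e as [w b]; simpl.
    rewrite !pair_tr. tauto.
  - rewrite <- gmulA, IHt2. tauto. Qed.
Lemma J_tr g u t : sg_translate g (J u t) = J (gmul g u) t.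
Proof. apply sg_ext; simpl; intros. rewrite jv_tr; tauto. rewrite je_tr; tauto. Qed.

Lemma J_fin u t : finite_sg (J u t).
Proof. revert u; induction t; intro u.
  - split. exists (u :: nil); simpl; auto. exists nil; simpl; auto.
  - destruct (IHt (gmul u (lval i l))) as [[l1 H1] [l2 H2]]. split.
    exists (u :: l1); simpl; intros v [ -> |]; auto.
    exists ((u, l) :: einv i (u, l) :: l2); simpl; intros v [ -> |[ -> |]]; auto.
  - destruct (IHt2 (gmul u (im_gval i t1))) as [[l1 H1] [l2 H2]]. split.
    exists (u :: l1); simpl; intros v [ -> |]; auto.
    exists l2; simpl; auto. Qed.

Lemma J_sub u t : is_subgraph i (J u t).
Proof. revert u; induction t; intro u; unfold is_subgraph; simpl.
  - tauto.
  - intros e [ -> |[ -> |He]].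
    + split; [auto|]. split; [right; apply jv_start|]. auto.
    + rewrite etgt_einv, einvK. simpl. split; [right; apply jv_start|]. auto.
    + destruct (IHt _ e He) as (?&?&?). auto.
  - intros e He. destruct (IHt2 _ e He) as (?&?&?). auto. Qed.

Lemma wval_app w1 w2 : wval i (w1 ++ w2) = gmul (wval i w1) (wval i w2).
Proof. induction w1; simpl. rewrite g1mul; auto. rewrite IHw1, gmulA; auto. Qed.
Lemma walk_app D u w1 w2 : walk_in i D u (w1 ++ w2) <-> walk_in i D u w1 /\ walk_in i D (gmul u (wval i w1)) w2.
Proof. revert u; induction w1; intro u; simpl. rewrite gmul1; tauto. rewrite IHw1, gmulA. tauto. Qed.
Lemma walk_mono D E u w : sub_le D E -> walk_in i D u w -> walk_in i E u w.
Proof. intros [_ HE]. revert u; induction w; simpl; intuition. Qed.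

Lemma lo_reach u t v : letters_only t -> jverts i u t v ->
  exists w, walk_in i (J u t) u w /\ gmul u (wval i w) = v.
Proof. revert u; induction t; intro u; simpl; try tauto.
  - intros _ ->. exists nil; simpl; split; auto. apply gmul1.
  - intros Hl [ -> |Hv]. exists nil; simpl; split; auto. apply gmul1.
    destruct (IHt _ Hl Hv) as [w [Hw Hw']]. exists (l :: w); simpl. split.
    split; auto. eapply walk_mono; [|exact Hw]. split; simpl; auto.
    rewrite <- gmulA in Hw'; auto. Qed.
Lemma lo_back u t v : letters_only t -> jverts i u t v ->
  exists w, walk_in i (J u t) v w /\ gmul v (wval i w) = u.
Proof. revert u; induction t; intro u; simpl; try tauto.
  - intros _ ->. exists nil; simpl; split; auto. apply gmul1.
  - intros Hl [ -> |Hv]. exists nil; simpl; split; auto. apply gmul1.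
    destruct (IHt _ Hl Hv) as [w [Hw Hw']]. exists (w ++ linv l :: nil). split.
    + apply walk_app. split. eapply walk_mono; [|exact Hw]. split; simpl; auto.
      rewrite Hw'. simpl. split; [right; left; reflexivity | exact I].
    + rewrite wval_app, gmulA, Hw'. simpl. rewrite gmul1, <- gmulA, lval_linv, gmul1. auto. Qed.
Lemma J_conn u t : letters_only t -> connected i (J u t).
Proof. intros Hl v1 v2 H1 H2. destruct (lo_back Hl H1) as [w1 [A1 B1]].
  destruct (lo_reach Hl H2) as [w2 [A2 B2]]. exists (w1 ++ w2). split.
  apply walk_app. rewrite B1. auto. rewrite wval_app, gmulA, B1. auto. Qed.

Lemma J_walk D u w : is_subgraph i D -> sv D u -> walk_in i D u w -> sub_le (J u (of_word w)) D.
Proof. intro HD. revert u; induction w as [|a w IH]; intros u Hu Hw; split; simpl.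
  - intros v ->; auto.
  - tauto.
  - destruct Hw as [H1 H2]. destruct (HD _ H1) as (?&?&?). intros v [ -> |Hv]; auto.
    apply (IH _ H0 H2); auto.
  - destruct Hw as [H1 H2]. destruct (HD _ H1) as (?&?&?). intros v [ -> |[ -> |Hv]]; auto.
    apply (IH _ H0 H2); auto. Qed.
Lemma gval_of_word w : im_gval i (of_word w) = wval i w.
Proof. induction w; simpl; congruence. Qed.
Lemma lo_of_word w : letters_only (of_word w).
Proof. induction w; simpl; auto. Qed.
Lemma lo_word t : letters_only t -> exists w, t = of_word w.
Proof. induction t; simpl; try tauto. exists nil; auto. intro H. destruct (IHt H) as [w ->]. exists (l :: w); auto. Qed.

Lemma J_end u : J u Iend = @sg_verts G X (u :: nil).
Proof. apply sg_ext; simpl; intros; [split; [intros ->; auto| intros [ -> |[]]; auto] | tauto]. Qed.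
End Jour.
Section Clo.
Context (G : Group) (X : Type) (i : X -> G) (conn : bool) (c : subgraph G X -> subgraph G X).
Context (Hcl : closure_op i conn c) (Hinv : G_invariant i conn c).

Notation P := (inP i conn).
Definition reach (U : subgraph G X) (x y : G) := exists w, walk_in i U x w /\ gmul x (wval i w) = y.

Lemma reach_trans U x y z : reach U x y -> reach U y z -> reach U x z.
Proof. intros [w1 [A1 B1]] [w2 [A2 B2]]. exists (w1 ++ w2). split.
  apply walk_app. rewrite B1; auto. rewrite wval_app, gmulA, B1; auto. Qed.
Lemma reach_mono U V x y : sub_le U V -> reach U x y -> reach V x y.
Proof. intros H [w [A B]]. exists w; split; auto. eapply walk_mono; eauto. Qed.
Lemma conn_via U v : (forall x, sv U x -> reach U x v /\ reach U v x) -> connected i U.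
Proof. intros H x y Hx Hy. destruct (H x Hx) as [H1 _]. destruct (H y Hy) as [_ H2].
  exact (reach_trans H1 H2). Qed.

Lemma P_union A B : P A -> P B -> (exists v, sv A v /\ sv B v) -> P (sg_union A B).
Proof. intros [SA CA] [SB CB] [v [HvA HvB]]. split.
  - intros e [He|He]; simpl; [destruct (SA e He) as (?&?&?)|destruct (SB e He) as (?&?&?)]; auto.
  - intro Hc. specialize (CA Hc). specialize (CB Hc). apply conn_via with v.
    intros x [Hx|Hx]; split.
    + apply (reach_mono (sub_union_l A B)). apply CA; auto.
    + apply (reach_mono (sub_union_l A B)). apply CA; auto.
    + apply (reach_mono (sub_union_r A B)). apply CB; auto.
    + apply (reach_mono (sub_union_r A B)). apply CB; auto. Qed.

Lemma walk_tr g D u w : walk_in i (sg_translate g D) u w <-> walk_in i D (gmul (ginv g) u) w.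
Proof. revert u; induction w; intro u; simpl. tauto. rewrite IHw, gmulA. tauto. Qed.

Lemma P_tr g D : P D -> P (sg_translate g D).
Proof. intros [SD CD]. split.
  - intros [u a] He. simpl in He. destruct (SD _ He) as (H1&H2&H3). unfold einv in *; unfold etgt in *; simpl in *.
    rewrite !gmulA. auto.
  - intros Hc x y Hx Hy. simpl in Hx, Hy. destruct (CD Hc _ _ Hx Hy) as [w [A B]].
    exists w. split. apply walk_tr; auto. rewrite <- (gKV g x), <- gmulA, B. apply gKV. Qed.

Definition good (t : imterm X) := conn = false \/ letters_only t.
Lemma P_J u t : good t -> P (J i u t).
Proof. intro Hg. split. apply J_sub. intro Hc. destruct Hg as [Hg|Hg]. rewrite Hg in Hc; discriminate.
  apply J_conn; auto. Qed.
Lemma P_verts l : conn = false -> P (@sg_verts G X l).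
Proof. intro Hc. split. intros e []. rewrite Hc; discriminate. Qed.

Lemma c_P D : P D -> P (c D). Proof. intro H; apply (proj1 Hcl D H). Qed.
Lemma c_ext D : P D -> sub_le D (c D). Proof. intro H; apply (proj1 Hcl D H). Qed.
Lemma c_idem D : P D -> c (c D) = c D. Proof. intro H; apply (proj1 Hcl D H). Qed.
Lemma c_mono D E : P D -> P E -> sub_le D E -> sub_le (c D) (c E). Proof. apply (proj2 Hcl). Qed.
Lemma c_tr g D : P D -> c (sg_translate g D) = sg_translate g (c D). Proof. apply Hinv. Qed.

Lemma c_least D E : P D -> P E -> sub_le D (c E) -> sub_le (c D) (c E).
Proof. intros HD HE H. rewrite <- (c_idem HE). apply c_mono; auto using c_P. Qed.

Lemma c_union_l A B : P A -> P B -> (exists v, sv A v /\ sv B v) ->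
  c (sg_union (c A) B) = c (sg_union A B).
Proof. intros HA HB Hs.
  assert (HU : P (sg_union A B)) by (apply P_union; auto).
  assert (HU' : P (sg_union (c A) B)).
  { apply P_union; auto using c_P. destruct Hs as [v [? ?]]. exists v; split; auto. apply (c_ext HA); auto. }
  apply sub_antisym.
  - apply c_least; auto. apply union_lub.
    + apply c_mono; auto. apply sub_union_l.
    + eapply sub_trans; [apply sub_union_r|]. apply c_ext; auto.
  - apply c_mono; auto. apply union_mono. apply c_ext; auto. apply sub_refl. Qed.
Lemma c_union_r A B : P A -> P B -> (exists v, sv A v /\ sv B v) ->
  c (sg_union A (c B)) = c (sg_union A B).
Proof. intros HA HB [v [? ?]]. rewrite (union_comm A (c B)), (union_comm A B). apply c_union_l; eauto. Qed.

Lemma c_squeeze F U : P F -> P U -> sub_le F U -> sub_le U (c F) -> c U = c F.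
Proof. intros. apply sub_antisym. apply c_least; auto. apply c_mono; auto. Qed.

Lemma good_let a t : good t -> good (Ilet a t).
Proof. unfold good; simpl; auto. Qed.
Lemma good_app t1 t2 : good t1 -> good t2 -> good (tapp t1 t2).
Proof. unfold good; intros [|] [|]; auto. right; apply lo_app; auto. Qed.

Notation S := (Sc i conn c).
Notation mul := (Sc_mul c).
Notation inv := (@Sc_inv G X).
Notation one := (Sc_one c).

Lemma sv_tr1 (g : G) (D : subgraph G X) : sv D gone -> sv (sg_translate g D) g.
Proof. simpl. rewrite gVmul. auto. Qed.

Lemma S_P (p : subgraph G X * G) : S p -> P (fst p).
Proof. intros [[F [HF [_ ->]]] _]. apply c_P; auto. Qed.
Lemma S_fix p : S p -> c (fst p) = fst p.
Proof. intros [[F [HF [_ ->]]] _]. apply c_idem; auto. Qed.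
Lemma S_1 p : S p -> sv (fst p) gone. Proof. intros (_&?&_); auto. Qed.
Lemma S_g p : S p -> sv (fst p) (snd p). Proof. intros (_&_&?); auto. Qed.

Lemma share_tr (A B : subgraph G X) (g : G) : P A -> sv A g -> sv B gone -> exists v, sv A v /\ sv (sg_translate g B) v.
Proof. intros. exists g. split; auto. apply sv_tr1; auto. Qed.

Lemma P_mulU p q : S p -> S q -> P (sg_union (fst p) (sg_translate (snd p) (fst q))).
Proof. intros Hp Hq. apply P_union; auto using S_P. apply P_tr, S_P; auto.
  apply share_tr; auto using S_P, S_g, S_1. Qed.

Lemma mul_sup p q : S p -> S q ->
  sub_le (fst p) (fst (mul p q)) /\ sub_le (sg_translate (snd p) (fst q)) (fst (mul p q)).
Proof. intros Hp Hq. pose proof (c_ext (P_mulU Hp Hq)) as H. simpl.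
  split; (eapply sub_trans; [|exact H]); [apply sub_union_l | apply sub_union_r]. Qed.

Lemma mul_absorb p q : S p -> sub_le (sg_translate (snd p) (fst q)) (fst p) ->
  mul p q = (fst p, gmul (snd p) (snd q)).
Proof. intros Hp H. unfold Sc_mul. rewrite union_absorb; auto. rewrite S_fix; auto. Qed.

Lemma AAI a : S a -> mul a (inv a) = (fst a, gone).
Proof. intro Ha. unfold Sc_mul, Sc_inv; simpl. rewrite tr_tr, gmulV, tr_one, union_absorb, S_fix; auto.
  apply sub_refl. Qed.

Lemma inv_inv a : inv (inv a) = a.
Proof. destruct a as [D g]. unfold Sc_inv; simpl. rewrite ginvK, tr_tr, gmulV, tr_one. auto. Qed.

Lemma MULJ (A B : subgraph G X) (g h : G) : P A -> P B -> sv A g -> sv B gone ->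
  mul (c A, g) (c B, h) = (c (sg_union A (sg_translate g B)), gmul g h).
Proof. intros HA HB Hg H1. unfold Sc_mul; simpl. rewrite <- c_tr; auto.
  assert (HB' : P (sg_translate g B)) by (apply P_tr; auto).
  rewrite c_union_l, c_union_r; auto.
  - apply share_tr; auto.
  - apply c_P; auto.
  - exists g. split; auto. apply (c_ext HB'). apply sv_tr1; auto. Qed.

Context (HX : X_generated i).

Lemma J_app_le (D : subgraph G X) u t1 t2 : sub_le (J i u t1) D -> sub_le (J i (gmul u (im_gval i t1)) t2) D ->
  sub_le (J i u (tapp t1 t2)) D.
Proof. intros [A1 B1] [A2 B2]. split; simpl; intros.
  apply jv_app in H as [|]; auto. apply je_app in H as [|]; auto. Qed.

Lemma move (D : subgraph G X) u x : P D -> sv D u -> sv D x ->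
  exists t, good t /\ sub_le (J i u t) D /\ gmul u (im_gval i t) = x.
Proof. intros HD Hu Hx. destruct conn eqn:Hc.
  - destruct (proj2 HD eq_refl u x Hu Hx) as [w [Hw Hw']]. exists (of_word w). split.
    right; apply lo_of_word. split. apply J_walk; auto. apply HD. rewrite gval_of_word; auto.
  - destruct (HX (gmul (ginv u) x)) as [w Hw]. exists (Im (of_word w) Iend). split. left; auto.
    simpl. rewrite gval_of_word, Hw, gmul1, gKV. split; [|auto]. split; simpl.
    intros v [ -> | -> ]; auto. rewrite gval_of_word, Hw, gKV; auto. intros e []. Qed.

Lemma cover_v (D F : subgraph G X) g lv : P D -> sub_le F D -> sv D g -> forall u, sv D u ->
  exists t, good t /\ sub_le (J i u t) D /\ (forall x, In x lv -> sv F x -> jverts i u t x) /\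
    gmul u (im_gval i t) = g.
Proof. intros HD HFD Hg. induction lv as [|x lv IH]; intros u Hu.
  - destruct (move HD Hu Hg) as [t (A&B&C)]. exists t; simpl; tauto.
  - destruct (classic (sv F x)) as [Hx|Hx].
    + assert (HxD : sv D x) by (apply (proj1 HFD); auto).
      destruct (move HD Hu HxD) as [t1 (A1&B1&C1)]. destruct (IH x HxD) as [t2 (A2&B2&D2&C2)].
      exists (tapp t1 t2). split. apply good_app; auto. split. apply J_app_le; rewrite ?C1; auto.
      split. intros y [ -> |Hy] Hy'; apply jv_app. left; rewrite <- C1; apply jv_end. right; rewrite C1; auto.
      rewrite gval_app, gmulA, C1; auto.
    + destruct (IH u Hu) as [t (A&B&D'&C)]. exists t. split; auto. split; auto. split; auto.
      intros y [ -> |Hy] Hy'; [tauto|auto]. Qed.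

Lemma cover_e (D F : subgraph G X) g lv le : P D -> sub_le F D -> sv D g -> forall u, sv D u ->
  exists t, good t /\ sub_le (J i u t) D /\ (forall x, In x lv -> sv F x -> jverts i u t x) /\
    (forall e, In e le -> se F e -> jedges i u t e) /\ gmul u (im_gval i t) = g.
Proof. intros HD HFD Hg. induction le as [|e le IH]; intros u Hu.
  - destruct (cover_v lv HD HFD Hg Hu) as [t (A&B&C&E)]. exists t; simpl; tauto.
  - destruct (classic (se F e)) as [He|He].
    + destruct e as [k a]. assert (HeD : se D (k, a)) by (apply (proj2 HFD); auto).
      destruct (proj1 HD _ HeD) as (Hk&Hka&Hinv'). simpl in Hk. unfold etgt in Hka; simpl in Hka.
      destruct (move HD Hu Hk) as [t1 (A1&B1&C1)]. destruct (IH _ Hka) as [t2 (A2&B2&D2&E2&C2)].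
      exists (tapp t1 (Ilet a t2)). split. apply good_app; [auto | apply good_let; auto].
      split. apply J_app_le; auto. rewrite C1. split; simpl.
      * intros v [ -> |Hv]; auto. apply B2; auto.
      * intros e' [ -> |[ -> |He']]; auto. apply B2; auto.
      * split. intros y Hy Hy'. apply jv_app. right. rewrite C1. simpl. right. apply D2; auto.
        split. intros e' [ <- |He'] He''; apply je_app; right; rewrite C1; simpl; auto.
        rewrite gval_app, gmulA, C1. simpl. rewrite gmulA. auto.
    + destruct (IH u Hu) as [t (A&B&D'&E&C)]. exists t. split; auto. split; auto. split; auto. split; auto.
      intros y [ <- |Hy] Hy'; [tauto|auto]. Qed.

Lemma cover (D F : subgraph G X) g : P D -> finite_sg F -> sub_le F D -> sv D gone -> sv D g ->
  exists t, good t /\ sub_le (J i gone t) D /\ sub_le F (J i gone t) /\ im_gval i t = g.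
Proof. intros HD [[lv Hv] [le He]] HFD H1 Hg.
  destruct (cover_e lv le HD HFD Hg H1) as [t (A&B&C&E&F')]. exists t. split; auto. split; auto.
  split. split; simpl; auto. rewrite g1mul in F'; auto. Qed.

Lemma NF p : S p -> exists F, P F /\ finite_sg F /\ fst p = c F /\ sv F gone /\ sv F (snd p).
Proof. intro Hp. destruct Hp as [[F0 [HF0 [Hfin Heq]]] [H1 Hg]].
  assert (HPD : P (fst p)) by (rewrite Heq; apply c_P; auto).
  assert (Hsub : sub_le F0 (fst p)) by (rewrite Heq; apply c_ext; auto).
  destruct (cover HPD Hfin Hsub H1 Hg) as [t (A&B&C&E)].
  exists (J i gone t). split. apply P_J; auto. split. apply J_fin. split.
  - rewrite Heq. symmetry. apply c_squeeze; auto. apply P_J; auto. rewrite <- Heq; auto.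
  - split. apply jv_start. rewrite <- E, <- (g1mul (im_gval i t)). apply jv_end. Qed.

Lemma S_eta p : S p -> p = (c (fst p), snd p).
Proof. intro Hp. rewrite S_fix; auto. destruct p; auto. Qed.

Lemma S_mul p q : S p -> S q -> S (mul p q).
Proof. intros Hp Hq. destruct (NF Hp) as [F (PF&FF&EF&F1&Fg)]. destruct (NF Hq) as [H (PH&FH&EH&H1&Hh)].
  destruct p as [D g], q as [E h]. simpl in *. subst D E. rewrite MULJ; auto.
  assert (PU : P (sg_union F (sg_translate g H))).
  { apply P_union; auto. apply P_tr; auto. apply share_tr; auto. }
  split. exists (sg_union F (sg_translate g H)). split; auto. split; auto. apply fin_union; auto. apply fin_tr; auto.
  simpl. split; apply (c_ext PU); simpl; auto. right. rewrite gVK; auto. Qed.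

Lemma S_inv p : S p -> S (inv p).
Proof. intros Hp. destruct (NF Hp) as [F (PF&FF&EF&F1&Fg)]. split.
  - exists (sg_translate (ginv (snd p)) F). split. apply P_tr; auto. split. apply fin_tr; auto.
    unfold Sc_inv; simpl. rewrite EF, c_tr; auto.
  - unfold Sc_inv; simpl. rewrite ginvK, gmul1, gmulV. split. apply S_g; auto. apply S_1; auto. Qed.

Lemma P_V1 : P (@sg_verts G X (gone :: nil)).
Proof. rewrite <- (J_end i). apply P_J. right; simpl; auto. Qed.

Lemma S_one : S one.
Proof. split. exists (@sg_verts G X (gone :: nil)). split. apply P_V1. split. apply fin_verts. auto.
  simpl. split; apply (c_ext P_V1); simpl; auto. Qed.

Lemma union_assoc (A B C : subgraph G X) : sg_union (sg_union A B) C = sg_union A (sg_union B C).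
Proof. apply sg_ext; simpl; tauto. Qed.

Lemma mul_assoc a b d : S a -> S b -> S d -> mul a (mul b d) = mul (mul a b) d.
Proof. intros Ha Hb Hd. unfold Sc_mul; simpl. f_equal; [|apply gmulA].
  pose proof (P_mulU Hb Hd) as Pbd. pose proof (P_mulU Ha Hb) as Pab.
  rewrite <- c_tr; auto.
  assert (Sh1 : exists v, sv (fst a) v /\ sv (sg_translate (snd a) (sg_union (fst b) (sg_translate (snd b) (fst d)))) v).
  { apply share_tr; auto using S_P, S_g. simpl. left. apply S_1; auto. }
  rewrite (c_union_r (S_P Ha) (P_tr (snd a) Pbd) Sh1).
  assert (Sh2 : exists v, sv (sg_union (fst a) (sg_translate (snd a) (fst b))) v /\
     sv (sg_translate (gmul (snd a) (snd b)) (fst d)) v).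
  { exists (gmul (snd a) (snd b)). split. simpl; right. rewrite gVK. apply S_g; auto.
       apply sv_tr1, S_1; auto. }
  rewrite (c_union_l Pab (P_tr _ (S_P Hd)) Sh2).
  rewrite tr_union, tr_tr, union_assoc. auto. Qed.

Lemma one_mul a : S a -> mul one a = a.
Proof. intro Ha. rewrite (S_eta Ha) at 1. unfold one, Sc_one. rewrite MULJ; auto using P_V1, S_P, S_1.
  2: simpl; auto. rewrite tr_one, union_comm, union_absorb, S_fix, g1mul; auto. destruct a; auto.
  split; simpl. intros v [ <- |[]]; apply S_1; auto. tauto. Qed.

Lemma mul_one a : S a -> mul a one = a.
Proof. intro Ha. rewrite (S_eta Ha) at 1. unfold one, Sc_one. rewrite MULJ; auto using P_V1, S_P, S_1.
  2: apply S_g; auto. 2: simpl; auto. rewrite union_absorb, S_fix, gmul1; auto. destruct a; auto.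
  rewrite <- (J_end i), J_tr. split; simpl. intros v ->. rewrite gmul1. apply S_g; auto. tauto. Qed.

Lemma aia a : S a -> mul (mul a (inv a)) a = a.
Proof. intro Ha. rewrite AAI; auto. unfold Sc_mul; simpl. rewrite tr_one, union_absorb, S_fix, g1mul; auto.
  destruct a; auto. apply sub_refl. Qed.

Lemma iai a : S a -> mul (mul (inv a) a) (inv a) = inv a.
Proof. intro Ha. pose proof (aia (S_inv Ha)) as H. rewrite inv_inv in H. exact H. Qed.

Lemma inv_uniq a b : S a -> S b -> mul (mul a b) a = a -> mul (mul b a) b = b -> b = inv a.
Proof. intros Ha Hb H1 H2.
  assert (Hg : snd b = ginv (snd a)).
  { apply (f_equal snd) in H1. simpl in H1. rewrite <- gmulA in H1.
    rewrite <- (gmul1 (snd a)) in H1 at 3. apply gcancel in H1.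
    rewrite <- (gmul1 (snd b)), <- (gmulV (snd a)), gmulA, H1, g1mul. auto. }
  assert (L1 : sub_le (sg_translate (snd a) (fst b)) (fst a)).
  { rewrite <- H1 at 2. eapply sub_trans. apply mul_sup; auto. apply mul_sup; auto. apply S_mul; auto. }
  assert (L2 : sub_le (sg_translate (snd b) (fst a)) (fst b)).
  { rewrite <- H2 at 2. eapply sub_trans. apply mul_sup; auto. apply mul_sup; auto. apply S_mul; auto. }
  destruct b as [E h]. unfold Sc_inv. simpl in *. subst h. f_equal. apply sub_antisym; auto.
  apply (tr_le (ginv (snd a))) in L1. rewrite tr_tr, gVmul, tr_one in L1. auto. Qed.

Lemma idem_snd e : idempotent S mul e -> snd e = gone.
Proof. intros [_ H]. apply (f_equal snd) in H. simpl in H. rewrite <- (gmul1 (snd e)) in H at 3.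
  apply gcancel in H; auto. Qed.
Lemma snd1_idem e : S e -> snd e = gone -> idempotent S mul e.
Proof. intros He H1. split; auto. destruct e as [D g]. unfold Sc_mul; simpl in *. subst g.
  rewrite tr_one, union_absorb, g1mul. change D with (fst (D, @gone G)). rewrite S_fix; auto. apply sub_refl. Qed.

Lemma E_unit : E_unitary S mul.
Proof. intros e s Hs He Hes. apply snd1_idem; auto. apply idem_snd in He. apply idem_snd in Hes.
  simpl in Hes. rewrite He, g1mul in Hes. auto. Qed.

Lemma sigma_iff a b : S a -> S b -> (snd a = snd b <-> sigma_rel S mul a b).
Proof. intros Ha Hb. split.
  - intro Hab. exists (mul (mul a (inv a)) (mul b (inv b))). split.
    + apply snd1_idem. apply S_mul; apply S_mul; auto using S_inv. simpl. rewrite !gmulV, g1mul. auto.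
    + rewrite !AAI; auto. unfold Sc_mul; simpl. rewrite !g1mul, !tr_one.
      assert (PU : P (sg_union (fst a) (fst b))).
      { apply P_union; auto using S_P. exists gone; split; apply S_1; auto. }
      assert (Sa : exists v, sv (sg_union (fst a) (fst b)) v /\ sv (fst a) v) by
        (exists gone; split; [left|]; apply S_1; auto).
      assert (Sb : exists v, sv (sg_union (fst a) (fst b)) v /\ sv (fst b) v) by
        (exists gone; split; [left|]; apply S_1; auto).
      rewrite (c_union_l PU (S_P Ha) Sa), (c_union_l PU (S_P Hb) Sb).
      rewrite (union_absorb (sub_union_l (fst a) (fst b))), (union_absorb (sub_union_r (fst a) (fst b))), Hab; auto.
  - intros [e [_ H]]. apply (f_equal snd) in H. simpl in H. apply gcancel in H; auto. Qed.

Lemma natle_iff p q : S p -> S q -> (nat_le S mul p q <-> snd p = snd q /\ sub_le (fst q) (fst p)).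
Proof. intros Hp Hq. split.
  - intros [e [He ->]]. pose proof (idem_snd He) as H1. destruct He as [Se _]. simpl. rewrite H1, g1mul.
    split; auto. pose proof (proj2 (mul_sup Se Hq)) as H. simpl in H. rewrite H1, !tr_one in H. rewrite tr_one. exact H.
  - intros [Hs Hl]. exists (mul p (inv p)). split.
    + apply snd1_idem. apply S_mul; auto using S_inv. simpl. apply gmulV.
    + rewrite AAI; auto. unfold Sc_mul; simpl. rewrite tr_one, union_absorb, S_fix, g1mul, <- Hs; auto.
      destruct p; auto. Qed.

Notation gen := (Sc_gen i c).
Notation m := (Sc_m c).

Lemma m_def p : m p = (c (@sg_verts G X (gone :: snd p :: nil)), snd p).
Proof. reflexivity. Qed.

Lemma good_lt a : good (Ilet a Iend). Proof. right; simpl; auto. Qed.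

Lemma Lx x : sg_letter i x = J i gone (Ilet (x, true) Iend).
Proof. apply sg_ext; simpl; intros; unfold lval, einv, etgt, lval; simpl; rewrite ?g1mul; [tauto|].
  unfold linv; simpl. tauto. Qed.

Lemma GENL a : gen_l inv gen a = (c (J i gone (Ilet a Iend)), lval i a).
Proof. destruct a as [x []]; unfold gen_l, Sc_gen, Sc_inv; simpl.
  - rewrite Lx; auto.
  - rewrite Lx, <- c_tr by (apply P_J, good_lt). rewrite J_tr. f_equal. f_equal.
    apply sg_ext; simpl; intros; unfold lval, einv, etgt, linv; simpl; rewrite ?gmul1, ?g1mul, ?gVmul; tauto. Qed.

Lemma snd_genl a : snd (gen_l inv gen a) = lval i a.
Proof. destruct a as [x []]; reflexivity. Qed.

Lemma S_genl a : S (gen_l inv gen a).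
Proof. rewrite GENL. split. exists (J i gone (Ilet a Iend)). split. apply P_J, good_lt. split. apply J_fin. auto.
  simpl. split; apply (c_ext (P_J gone (good_lt a))). apply jv_start.
  simpl. right. rewrite g1mul. auto. Qed.

Lemma S_gen x : S (gen x).
Proof. exact (S_genl (x, true)). Qed.

Lemma snd_eval t : snd (im_eval mul one inv m gen t) = im_gval i t.
Proof. induction t; simpl; auto. rewrite snd_genl; congruence. congruence. Qed.

Lemma EVAL t : good t -> im_eval mul one inv m gen t = (c (J i gone t), im_gval i t).
Proof. induction t as [|a t IH|v _ t IH]; intro Hg; simpl.
  - rewrite J_end. auto.
  - assert (Hg' : good t) by (destruct Hg as [|H]; [left|right]; auto).
    rewrite GENL, IH, MULJ; auto using P_J, good_lt.
    2: { simpl. right. rewrite g1mul. auto. }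
    2: apply jv_start.
    rewrite J_tr, gmul1. f_equal. f_equal. apply sg_ext; simpl; intros; rewrite ?g1mul.
    + split. intros [[|]|]; auto. subst. right; apply jv_start. tauto.
    + tauto.
  - assert (Hc : conn = false) by (destruct Hg as [|[]]; auto).
    assert (Hg' : good t) by (left; auto).
    rewrite m_def, snd_eval, IH, MULJ; auto using P_J, P_verts.
    2: { simpl. auto. }
    2: apply jv_start.
    rewrite J_tr, gmul1. f_equal. f_equal. apply sg_ext; simpl; intros; rewrite ?g1mul.
    + split. intros [[|[|[]]]|]; auto. subst. right; apply jv_start. intros [ <- |]; auto.
    + tauto. Qed.

Lemma REP p : S p -> exists t, good t /\ im_eval mul one inv m gen t = p.
Proof. intro Hp. destruct Hp as [[F0 [HF0 [Hfin Heq]]] [H1 Hg]].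
  assert (HPD : P (fst p)) by (rewrite Heq; apply c_P; auto).
  assert (Hsub : sub_le F0 (fst p)) by (rewrite Heq; apply c_ext; auto).
  destruct (cover HPD Hfin Hsub H1 Hg) as [t (A&B&C&E)].
  exists t. split; auto. rewrite EVAL; auto. rewrite E. destruct p as [D g]; simpl in *. f_equal.
  subst D. apply c_squeeze; auto. apply P_J; auto. Qed.

Lemma Rchar p t : S p -> (R_rel S mul p t <-> S t /\ fst t = fst p).
Proof. intro Hp. split.
  - intros [u [v (Hu&Hv&E1&E2)]]. assert (Ht : S t) by (subst t; apply S_mul; auto).
    split; auto. apply sub_antisym.
    + rewrite E2. apply mul_sup; auto.
    + rewrite E1. apply mul_sup; auto.
  - intros [Ht E]. exists (mul (inv p) t), (mul (inv t) p). split. apply S_mul; auto using S_inv.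
    split. apply S_mul; auto using S_inv. split.
    + rewrite mul_assoc, AAI, <- E, <- AAI, aia; auto using S_inv.
    + rewrite mul_assoc, AAI, E, <- AAI, aia; auto using S_inv. Qed.

Lemma mul_gen t a : S t -> mul t (gen_l inv gen a) =
  (c (sg_union (fst t) (J i (snd t) (Ilet a Iend))), gmul (snd t) (lval i a)).
Proof. intro Ht. rewrite (S_eta Ht) at 1. rewrite GENL, MULJ; auto using S_P, P_J, good_lt, S_g, jv_start.
  rewrite J_tr, gmul1. auto. all: apply jv_start. Qed.

Lemma edge_char p t a : S p -> S t -> fst t = fst p ->
  (R_rel S mul p (mul t (gen_l inv gen a)) <-> se (fst p) (snd t, a)).
Proof. intros Hp Ht E. assert (HU : P (sg_union (fst t) (J i (snd t) (Ilet a Iend)))).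
  { apply P_union; auto using S_P, P_J, good_lt. exists (snd t); split. apply S_g; auto. apply jv_start. }
  split.
  - intro HR. apply (Rchar _ Hp) in HR. destruct HR as [_ HR]. rewrite mul_gen in HR; auto. simpl in HR.
    rewrite <- HR. apply (c_ext HU). simpl. right. left. auto.
  - intro He. apply Rchar; auto. split. apply S_mul; auto using S_genl. rewrite mul_gen; auto. simpl.
    rewrite union_absorb, E, S_fix; auto. rewrite E. destruct (proj1 (S_P Hp) _ He) as (H1&H2&H3).
    split; simpl. intros v [ -> | -> ]; [exact H1 | exact H2]. intros e [ -> | [ -> | []]]; auto. Qed.

Lemma schutz (Hc : conn = true) p : S p -> schutz_iso S mul inv gen p i (fst p).
Proof. intro Hp. unfold schutz_iso, lgraph_iso.
  exists snd, (fun e => (snd (fst e), snd e)). split; [|split; [|split; [|split; [|split; [|split]]]]].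
  - intros v [Hv HR]. apply (Rchar _ Hp) in HR as [_ E]. rewrite <- E. apply S_g; auto.
  - intros v w [Hv Rv] [Hw Rw] Hs. apply (Rchar _ Hp) in Rv as [_ Ev]. apply (Rchar _ Hp) in Rw as [_ Ew].
    destruct v, w; simpl in *; congruence.
  - intros y Hy. exists (fst p, y). assert (Hy' : S (fst p, y)).
    { split. apply (proj1 Hp). split. exact (S_1 Hp). exact Hy. }
    split; auto. split; auto. apply Rchar; auto.
  - intros [t a] (Ht&Rt&Rt2). simpl in *. apply (Rchar _ Hp) in Rt as [_ E]. apply edge_char in Rt2; auto.
  - intros [t a] [t' a'] (Ht&Rt&_) (Ht'&Rt'&_) Heq. simpl in *. apply (Rchar _ Hp) in Rt as [_ E].
    apply (Rchar _ Hp) in Rt' as [_ E']. inversion Heq. destruct t, t'; simpl in *; subst. auto.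
  - intros [k a] He. assert (Hk : sv (fst p) k) by (apply (proj1 (S_P Hp) _ He)).
    assert (Ht : S (fst p, k)) by (split; [apply (proj1 Hp)|split; [exact (S_1 Hp) | exact Hk]]).
    exists ((fst p, k), a). split; auto. simpl. split; auto. split. apply Rchar; auto.
    apply edge_char; auto.
  - intros [t a] _. simpl. rewrite snd_genl. auto. Qed.

Lemma Finv (Hc : conn = false) : F_inverse_with S mul m.
Proof. intros a Ha. assert (Hm : S (m a)).
  { split. exists (@sg_verts G X (gone :: snd a :: nil)). split. apply P_verts; auto. split. apply fin_verts. auto.
    simpl. split; apply (c_ext (P_verts _ Hc)); simpl; auto. }
  split; auto. split. apply sigma_iff; auto.
  intros b Hb Hs. apply sigma_iff in Hs; auto. apply natle_iff; auto. simpl. split; auto.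
  rewrite <- (S_fix Hb). apply c_mono; auto using P_verts, S_P. split; simpl.
  intros v [ <- | [ <- | []]]. apply S_1; auto. rewrite <- Hs. apply S_g; auto. tauto. Qed.

Fixpoint to_f (t : imterm X) : fterm X :=
  match t with
  | Iend => FOne
  | Ilet a t => FMul (if snd a then FGen (fst a) else FInv (FGen (fst a))) (to_f t)
  | Im v t => FMul (FM (to_f v)) (to_f t)
  end.
Lemma to_f_eval t : fterm_eval mul one inv m gen (to_f t) = im_eval mul one inv m gen t.
Proof. induction t; simpl; try congruence. destruct l as [x []]; unfold gen_l; simpl; congruence. Qed.

Lemma Fgen (Hc : conn = false) : X_gen_F_inverse_monoid S mul one inv m gen.
Proof. split. apply S_gen. intros s Hs. destruct (REP Hs) as [t [_ E]]. exists (to_f t). rewrite to_f_eval; auto. Qed.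

Lemma Xgen (Hc : conn = true) : X_gen_inverse_monoid S mul one inv gen.
Proof. split. apply S_gen. intros s Hs. destruct (REP Hs) as [t [Hg E]].
  destruct Hg as [H|Hg]. rewrite Hc in H; discriminate. destruct (lo_word Hg) as [w ->].
  exists w. rewrite <- E. clear. induction w; simpl; congruence. Qed.

Lemma lj_iff (Hc : conn = false) (D : subgraph G X) u g h : P D -> c D = D ->
  (labels_journey i D g h u <-> sub_le (sg_translate g (c (J i gone u))) D /\ h = gmul g (im_gval i u)).
Proof. intros HD HcD. assert (PJ : P (J i gone u)) by (apply P_J; left; auto).
  assert (E : J i g u = sg_translate g (J i gone u)) by (rewrite J_tr, gmul1; auto).
  unfold labels_journey. split.
  - intros [A [B C]]. split; auto. rewrite <- c_tr; auto. rewrite <- HcD. apply c_mono; auto. apply P_tr; auto.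
    rewrite <- E. split; auto.
  - intros [A C]. assert (L : sub_le (J i g u) D).
    { rewrite E. eapply sub_trans; [apply tr_le, c_ext, PJ|exact A]. }
    destruct L as [L1 L2]. split; auto. Qed.

Lemma Fschutz (Hc : conn = false) p : S p -> F_schutz_graph i mul one inv m gen p (fst p).
Proof. intro Hp. split. destruct (REP Hp) as [t [_ E]]; exists t; auto.
  intros w Hw. assert (Gw : good w) by (left; auto). rewrite EVAL in Hw by auto. subst p. simpl.
  assert (PJ : P (J i gone w)) by (apply P_J; auto).
  assert (PD : P (c (J i gone w))) by (apply c_P; auto).
  split. apply PD. split.
  { intros u v Huv g h _ _. rewrite !EVAL in Huv by (left; auto). inversion Huv as [[H1 H2]].
    rewrite !lj_iff; auto; try apply c_idem; auto. rewrite H1, H2. tauto. }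
  split. apply c_ext; auto.
  intros E HE HcE HwE.
  assert (Help : forall v, im_gval i v = im_gval i w -> sub_le (J i gone w) (J i gone v) ->
            sub_le (J i gone v) (c (J i gone w)) -> sub_le (J i gone v) E).
  { intros v Gv L1 L2. assert (PJv : P (J i gone v)) by (apply P_J; left; auto).
    assert (Ev : im_eval mul one inv m gen w = im_eval mul one inv m gen v).
    { rewrite !EVAL by (left; auto). rewrite Gv. f_equal. symmetry. apply c_squeeze; auto. }
    assert (Hl : labels_journey i E gone (gmul gone (im_gval i w)) w).
    { destruct HwE as [A B]. split; auto. }
    destruct HwE as [A B].
    destruct (HcE w v Ev gone (gmul gone (im_gval i w)) (A _ (jv_start i gone w)) (A _ (jv_end i gone w))) as [Hl' _].
    destruct (Hl' Hl) as (A'&B'&_). split; auto. }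
  pose proof (c_ext PJ) as [CJ1 CJ2].
  split.
  - intros k Hk. destruct (HX k) as [w1 Hw1]. destruct (HX (ginv k)) as [w2 Hw2].
    set (v := Im (of_word w1) (Im (of_word w2) w)).
    assert (Hv : forall x, jverts i gone v x <-> x = gone \/ x = k \/ jverts i gone w x).
    { intro x. unfold v. simpl. rewrite !gval_of_word, Hw1, Hw2, g1mul, gmulV. tauto. }
    assert (He : forall e, jedges i gone v e <-> jedges i gone w e).
    { intro e. unfold v. simpl. rewrite !gval_of_word, Hw1, Hw2, g1mul, gmulV. tauto. }
    assert (L : sub_le (J i gone v) E).
    { apply Help.
      - unfold v; simpl. rewrite !gval_of_word, Hw1, Hw2, gKV. auto.
      - split; simpl; intros. apply Hv; auto. apply He; auto.
      - split; simpl; intros x Hx. apply Hv in Hx as [ -> | [ -> | Hx]]; auto. apply CJ1, jv_start.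
        apply He in Hx; auto. }
    apply L. apply Hv. auto.
  - intros [k a] Hka. destruct (proj1 PD _ Hka) as (H1&H2&H3). simpl in H1. unfold etgt in H2; simpl in H2.
    destruct (HX k) as [w1 Hw1]. destruct (HX (ginv (gmul k (lval i a)))) as [w2 Hw2].
    set (v := Im (of_word w1) (Ilet a (Im (of_word w2) w))).
    assert (Hv : forall x, jverts i gone v x <-> x = gone \/ x = k \/ x = gmul k (lval i a) \/ jverts i gone w x).
    { intro x. unfold v. simpl. rewrite !gval_of_word, Hw1, Hw2, g1mul, gmulV. tauto. }
    assert (He : forall e, jedges i gone v e <-> e = (k, a) \/ e = einv i (k, a) \/ jedges i gone w e).
    { intro e. unfold v. simpl. rewrite !gval_of_word, Hw1, Hw2, g1mul, gmulV. tauto. }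
    assert (L : sub_le (J i gone v) E).
    { apply Help.
      - unfold v; simpl. rewrite !gval_of_word, Hw1, Hw2, gmulA, gKV. auto.
      - split; simpl; intros. apply Hv; auto. apply He; auto.
      - split; simpl; intros x Hx.
        + apply Hv in Hx as [ -> | [ -> | [ -> | Hx]]]; auto. apply CJ1, jv_start.
        + apply He in Hx as [ -> | [ -> | Hx]]; auto. }
    apply L. apply He. auto. Qed.
End Clo.

Theorem mainTheorem5 (G : Group) (X : Type) (i : X -> G) (conn : bool)
  (c : subgraph G X -> subgraph G X) :
  X_generated i ->
  closure_op i conn c ->
  G_invariant i conn c ->
  let S := Sc i conn c in
  let mul := Sc_mul c in
  let one := Sc_one c in
  let inv := @Sc_inv G X in
  let gen := Sc_gen i c in
  inverse_monoid S mul one inv /\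
  E_unitary S mul /\
  @greatest_group_image _ S mul one G snd /\
  (forall p q, S p -> S q ->
     (nat_le S mul p q <-> snd p = snd q /\ sub_le (fst q) (fst p))) /\
  (conn = true ->
     X_gen_inverse_monoid S mul one inv gen /\
     (forall p, S p -> schutz_iso S mul inv gen p i (fst p))) /\
  (conn = false ->
     F_inverse_with S mul (Sc_m c) /\
     X_gen_F_inverse_monoid S mul one inv (Sc_m c) gen /\
     (forall p, S p -> F_schutz_graph i mul one inv (Sc_m c) gen p (fst p))).
Proof.
  intros HX Hcl Hinv. cbv zeta.
  split; [|split; [|split; [|split; [|split]]]].
  - split; [split; [|split]|split; [|split]].
    + eapply S_one; eauto.
    + intros; eapply S_mul; eauto.
    + intros; eapply S_inv; eauto.
    + intros; eapply mul_assoc; eauto.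
    + intros a Ha; split; [eapply one_mul|eapply mul_one]; eauto.
    + intros a Ha; split; [eapply aia|split; [eapply iai| intros b Hb H1 H2; eapply inv_uniq]]; eauto.
  - eapply E_unit; eauto.
  - split; [reflexivity|split; [intros; reflexivity|split]].
    + intro g. destruct (HX g) as [w Hw].
      assert (PJ : inP i conn (J i gone (of_word w))) by (apply P_J; right; apply lo_of_word).
      exists (c (J i gone (of_word w)), g). split; [|reflexivity].
      split. exists (J i gone (of_word w)). split; auto. split; auto. apply J_fin.
      simpl. split; apply (c_ext Hcl PJ). apply jv_start.
      rewrite <- Hw, <- gval_of_word, <- (g1mul (im_gval i (of_word w))). apply jv_end.
    + intros; eapply sigma_iff; eauto.
  - intros; eapply natle_iff; eauto.
  - intro Hc; split; [eapply Xgen | intros; eapply schutz]; eauto.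
  - intro Hc; split; [eapply Finv|split; [eapply Fgen | intros; eapply Fschutz]]; eauto.
Qed.
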